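(* Let $(\Omega,\Sigma,\mathbb{P}_0)$ be a probability space, $\mathbb{L}^2=\mathbb{L}^2(\Omega,\Sigma,\mathbb{P}_0)$, and $n\ge 1$ an integer. The functional $\mathrm{MAXVAR}_n:\mathbb{L}^2\to\mathbb{R}$, $\mathrm{MAXVAR}_n(X)=\mathbb{E}(\max\{X_1,\dots,X_n\})$ where $X_1,\dots,X_n$ are i.i.d. copies of $X$, is a coherent risk measure in the basic sense, i.e. it satisfies: (A1) $\mathrm{MAXVAR}_n(C)=C$ for every constant $C$; (A2) $\mathrm{MAXVAR}_n(\lambda X+(1-\lambda)Y)\le \lambda\,\mathrm{MAXVAR}_n(X)+(1-\lambda)\,\mathrm{MAXVAR}_n(Y)$ for all $X,Y\in\mathbb{L}^2$ and $\lambda\in[0,1]$; (A3) $\mathrm{MAXVAR}_n(X)\le\mathrm{MAXVAR}_n(Y)$ whenever $X,Y\in\mathbb{L}^2$ and $X\le Y$; (A4) if $\|X^k-X\|_2\to0$ and $\mathrm{MAXVAR}_n(X^k)\le 0$ for all $k\in\mathbb{N}$, then $\mathrm{MAXVAR}_n(X)\le0$; (A5) $\mathrm{MAXVAR}_n(\lambda X)=\lambda\,\mathrm{MAXVAR}_n(X)$ for all $\lambda>0$ and $X\in\mathbb{L}^2$.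
   Context: $\mathbb{L}^2$ is the space of square-integrable random variables on $(\Omega,\Sigma,\mathbb{P}_0)$ with norm $\|\cdot\|_2$. ''i.i.d. copies of $X$'' means independent random variables each having the same distribution as $X$; the value $\mathbb{E}(\max\{X_1,\dots,X_n\})$ depends only on the distribution of $X$, so $\mathrm{MAXVAR}_n$ is well defined (and finite on $\mathbb{L}^2$). *)

(* Defs.v *)
From HB Require Import structures.
From mathcomp Require Import all_boot all_order all_algebra.
From mathcomp Require Import all_classical all_reals all_analysis.
Set Implicit Arguments. Unset Strict Implicit. Unset Printing Implicit Defensive.
Import Order.TTheory GRing.Theory Num.Theory.
Import numFieldNormedType.Exports.
Local Open Scope classical_set_scope.
Local Open Scope ring_scope.

Section MaxVar.
Context d (T : measurableType d) (R : realType) (P : probability T R).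

Definition L2 (X : T -> R) : Prop :=
  measurable_fun setT X /\ finite_norm P 2%:E X.

Definition Exp (X : T -> R) : R := \int[P]_(w in setT) X w.

(* maxtail X k m = E[ max(m, X_1, ..., X_k) ] where X_1..X_k are i.i.d.
   copies of X realised as the coordinates of the product space
   (Omega^k, P^{(x)k}); the expectation over the product is written as the
   iterated integral (one integral per independent coordinate). *)
Fixpoint maxtail (X : T -> R) (k : nat) (m : R) : R :=
  match k with
  | 0%N => m
  | k'.+1 => Exp (fun w => maxtail X k' (Num.max m (X w)))
  end.

Definition MAXVAR (n : nat) (X : T -> R) : R :=
  Exp (fun w => maxtail X n.-1 (X w)).

End MaxVar.

(* Main.v *)
Require Import Defs.
From HB Require Import structures.
From mathcomp Require Import all_boot all_order all_algebra.
From mathcomp Require Import all_classical all_reals all_analysis.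
From mathcomp Require Import measurable_realfun lra unstable.
Import Order.TTheory GRing.Theory Num.Theory.
Import numFieldNormedType.Exports.
Local Open Scope classical_set_scope.
Local Open Scope ring_scope.

Set Implicit Arguments. Unset Strict Implicit.
Section S.
Context (R : realType) (d : measure_display) (T : measurableType d)
  (P : probability T R).

Definition intg (f : T -> R) := P.-integrable setT (EFin \o f).
Definition lip (g : R -> R) := forall a b, `|g a - g b| <= `|a - b|.

Lemma lip_cont g : lip g -> continuous g.
Proof.
move=> Lg x; apply/cvgrPdist_lt => e e0.
near=> y; rewrite (le_lt_trans (Lg _ _))//.
Unshelve. all: by end_near.
Qed.

Lemma intg_comp (X : T -> R) g m : intg X -> lip g ->
  intg (fun w => g (Num.max m (X w))).
Proof.
move=> iX Lg.
have mX : measurable_fun setT X.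
  by apply/measurable_EFinP; case/integrableP: iX.
apply: (@le_integrable _ _ _ P setT measurableT _
   (EFin \o (fun w => (`|g 0| + `|m|) + `|X w|))).
- apply/measurable_EFinP; apply: measurableT_comp.
    by apply: continuous_measurable_fun; exact: lip_cont.
  exact: (measurable_maxr (measurable_cst m) mX).
- move=> w _ /=.
  have h1 : `|g (Num.max m (X w))| <= `|g 0| + `|Num.max m (X w)|.
    have := Lg (Num.max m (X w)) 0; rewrite subr0 => H.
    rewrite -[X in `|X|](subrK (g 0)); apply: (le_trans (ler_normD _ _)).
    by rewrite addrC lerD2l.
  rewrite lee_fin [X in _ <= X]ger0_norm; last by rewrite !addr_ge0.
  apply: (le_trans h1); rewrite -addrA lerD2l.
  by rewrite /Num.max; case: ifP => _; rewrite ?lerDl ?lerDr.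
- have := integrableD measurableT
     (finite_measure_integrable_cst P (`|g 0| + `|m|) measurableT)
     (integrable_norm iX).
  by apply: eq_integrable => // w _.
Qed.

Lemma intg_cst c : intg (fun _ => c).
Proof. exact: (finite_measure_integrable_cst P c measurableT). Qed.

Lemma intg_add f g : intg f -> intg g -> intg (fun w => f w + g w).
Proof.
move=> hf hg; have := integrableD measurableT hf hg.
by apply: eq_integrable => // w _.
Qed.

Lemma intg_scale c f : intg f -> intg (fun w => c * f w).
Proof.
move=> hf; have := integrableZl measurableT c hf.
by apply: eq_integrable => // w _.
Qed.

Lemma intg_sub f g : intg f -> intg g -> intg (fun w => f w - g w).
Proof.
move=> hf hg; have := intg_add hf (intg_scale (-1) hg).
by apply: eq_integrable => // w _ /=; rewrite mulN1r.
Qed.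

Lemma intg_norm f : intg f -> intg (fun w => `|f w|).
Proof. by move=> hf; have := integrable_norm hf. Qed.

Lemma E_cst c : Exp P (fun _ => c) = c.
Proof.
rewrite /Exp Rintegral_cst //.
have h : (P : {measure set T -> \bar R}) [set: T] = 1%E := probability_setT P.
rewrite h /=.
by rewrite mulr1.
Qed.

Lemma E_add f g : intg f -> intg g ->
  Exp P (fun w => f w + g w) = Exp P f + Exp P g.
Proof. by move=> hf hg; rewrite /Exp RintegralD. Qed.

Lemma E_sub f g : intg f -> intg g ->
  Exp P (fun w => f w - g w) = Exp P f - Exp P g.
Proof. by move=> hf hg; rewrite /Exp RintegralB. Qed.

Lemma E_scale c f : intg f -> Exp P (fun w => c * f w) = c * Exp P f.
Proof. by move=> hf; rewrite /Exp RintegralZl. Qed.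

Lemma E_le f g : intg f -> intg g -> (forall w, f w <= g w) ->
  Exp P f <= Exp P g.
Proof. by move=> hf hg fg; rewrite /Exp le_Rintegral. Qed.

Lemma E_norm f : intg f -> `|Exp P f| <= Exp P (fun w => `|f w|).
Proof. by move=> hf; rewrite /Exp le_normr_Rintegral. Qed.

Lemma max_lip (m mp x y : R) : `|Num.max m x - Num.max mp y| <= `|m - mp| + `|x - y|.
Proof.
have h1 := ler_norm (m - mp). have h2 := ler_norm (x - y).
have h3 : -(m - mp) <= `|m - mp| by rewrite -normrN ler_norm.
have h4 : -(x - y) <= `|x - y| by rewrite -normrN ler_norm.
rewrite ler_norml.
have [hmx|hmx] := ltP m x; have [hmy|hmy] := ltP mp y; apply/andP; split; lra.
Qed.

Lemma E_norm0 (X : T -> R) : Exp P (fun w => `|X w - X w|) = 0.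
Proof.
rewrite (_ : (fun w => _) = fun _ => 0); first exact: E_cst.
by apply: funext => w; rewrite subrr normr0.
Qed.

Lemma maxtail_lip k : forall X Y, intg X -> intg Y -> forall m mp,
  `|maxtail P X k m - maxtail P Y k mp|
    <= `|m - mp| + k%:R * Exp P (fun w => `|X w - Y w|).
Proof.
elim: k => [|k IH] X Y iX iY m mp /=.
  by rewrite mul0r addr0.
have lipX : lip (maxtail P X k).
  by move=> a b; have := IH X X iX iX a b; rewrite E_norm0 mulr0 addr0.
have lipY : lip (maxtail P Y k).
  by move=> a b; have := IH Y Y iY iY a b; rewrite E_norm0 mulr0 addr0.
set c := Exp P (fun w => `|X w - Y w|).
have i1 := intg_comp m iX lipX; have i2 := intg_comp mp iY lipY.
have iXY := intg_norm (intg_sub iX iY).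
rewrite -E_sub //; apply: le_trans (E_norm (intg_sub i1 i2)) _.
apply: le_trans (E_le (g := fun w => `|m - mp| + `|X w - Y w| + k%:R * c)
   (intg_norm (intg_sub i1 i2)) _ _) _.
- exact: intg_add (intg_add (intg_cst _) iXY) (intg_cst _).
- move=> w /=; apply: le_trans (IH X Y iX iY _ _) _; rewrite lerD2r.
  exact: max_lip.
rewrite E_add; [|exact: intg_add (intg_cst _) iXY|exact: intg_cst].
rewrite E_add; [|exact: intg_cst|exact: iXY].
rewrite !E_cst -/c -natr1 mulrDl mul1r.
lra.
Qed.

Lemma lip_maxtail k X : intg X -> lip (maxtail P X k).
Proof.
by move=> iX a b; have := maxtail_lip k iX iX a b; rewrite E_norm0 mulr0 addr0.
Qed.

Lemma intg_comp1 (X : T -> R) g : intg X -> lip g -> intg (fun w => g (X w)).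
Proof.
move=> iX Lg.
have mX : measurable_fun setT X.
  by apply/measurable_EFinP; case/integrableP: iX.
apply: (@le_integrable _ _ _ P setT measurableT _
   (EFin \o (fun w => `|g 0| + `|X w|))).
- apply/measurable_EFinP; apply: measurableT_comp => //.
  by apply: continuous_measurable_fun; exact: lip_cont.
- move=> w _ /=.
  have h1 : `|g (X w)| <= `|g 0| + `|X w|.
    have := Lg (X w) 0; rewrite subr0 => H.
    rewrite -[X in `|X|](subrK (g 0)); apply: (le_trans (ler_normD _ _)).
    by rewrite addrC lerD2l.
  by rewrite lee_fin [X in _ <= X]ger0_norm //; rewrite !addr_ge0.
- have := integrableD measurableT
     (finite_measure_integrable_cst P (`|g 0|) measurableT)
     (integrable_norm iX).
  by apply: eq_integrable => // w _.
Qed.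

Lemma MAXVAR_lip n X Y : (1 <= n)%N -> intg X -> intg Y ->
  `|MAXVAR P n X - MAXVAR P n Y| <= n%:R * Exp P (fun w => `|X w - Y w|).
Proof.
case: n => // n _ iX iY; rewrite /MAXVAR /=.
set c := Exp P (fun w => `|X w - Y w|).
have i1 := intg_comp1 iX (lip_maxtail n iX).
have i2 := intg_comp1 iY (lip_maxtail n iY).
have iXY := intg_norm (intg_sub iX iY).
rewrite -E_sub //; apply: le_trans (E_norm (intg_sub i1 i2)) _.
apply: le_trans (E_le (g := fun w => `|X w - Y w| + n%:R * c)
   (intg_norm (intg_sub i1 i2)) _ _) _.
- exact: intg_add iXY (intg_cst _).
- by move=> w /=; apply: le_trans (maxtail_lip n iX iY _ _) _.
rewrite E_add; [|exact: iXY|exact: intg_cst].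
by rewrite E_cst -/c -natr1 mulrDl mul1r addrC.
Qed.

Lemma E_le_ae f g : intg f -> intg g -> {ae P, forall w, f w <= g w} ->
  Exp P f <= Exp P g.
Proof.
move=> hf hg hfg.
have mf : measurable_fun setT f by apply/measurable_EFinP; case/integrableP: hf.
have mg : measurable_fun setT g by apply/measurable_EFinP; case/integrableP: hg.
have mh : measurable_fun setT (fun w => Num.max (f w) (g w)).
  exact: (measurable_maxr mf mg).
have ih : intg (fun w => Num.max (f w) (g w)).
  apply: (@le_integrable _ _ _ P setT measurableT _
   (EFin \o (fun w => `|f w| + `|g w|))).
  - exact/measurable_EFinP.
  - move=> w _ /=; rewrite lee_fin [X in _ <= X]ger0_norm ?addr_ge0 //.
    by rewrite /Num.max; case: ifP => _; rewrite ?lerDl ?lerDr.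
  - exact: intg_add (intg_norm hf) (intg_norm hg).
have -> : Exp P g = Exp P (fun w => Num.max (f w) (g w)).
  rewrite /Exp /Rintegral; congr fine.
  apply: ae_eq_integral => //.
  - exact/measurable_EFinP.
  - exact/measurable_EFinP.
  apply: filterS hfg => w hw _ /=.
  by congr EFin; apply/esym/max_idPr.
by apply: E_le => // w; rewrite le_max lexx.
Qed.

Lemma maxtail_mono k : forall X Y, intg X -> intg Y ->
  {ae P, forall w, X w <= Y w} -> forall m mp, m <= mp ->
  maxtail P X k m <= maxtail P Y k mp.
Proof.
elim: k => [|k IH] X Y iX iY hXY m mp hm //=.
apply: E_le_ae.
- exact: intg_comp iX (lip_maxtail k iX).
- exact: intg_comp iY (lip_maxtail k iY).
apply: filterS (hXY) => w hw; apply: (IH X Y iX iY hXY).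
by rewrite ge_max !le_max hm hw orbT.
Qed.

Lemma MAXVAR_mono n X Y : intg X -> intg Y ->
  {ae P, forall w, X w <= Y w} -> MAXVAR P n X <= MAXVAR P n Y.
Proof.
move=> iX iY hXY; rewrite /MAXVAR; apply: E_le_ae.
- exact: intg_comp1 iX (lip_maxtail _ iX).
- exact: intg_comp1 iY (lip_maxtail _ iY).
by apply: filterS (hXY) => w hw; apply: (maxtail_mono _ iX iY hXY).
Qed.

Lemma maxtail_conv k : forall X Y l, intg X -> intg Y -> 0 <= l <= 1 ->
  forall a b, maxtail P (fun w => l * X w + (1 - l) * Y w) k (l * a + (1 - l) * b)
   <= l * maxtail P X k a + (1 - l) * maxtail P Y k b.
Proof.
elim: k => [|k IH] X Y l iX iY /andP[l0 l1] a b /=; first by [].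
have l0' : 0 <= 1 - l by rewrite subr_ge0.
set Z := fun w => l * X w + (1 - l) * Y w.
have iZ : intg Z by exact: intg_add (intg_scale _ iX) (intg_scale _ iY).
have i1 := intg_comp a iX (lip_maxtail k iX).
have i2 := intg_comp b iY (lip_maxtail k iY).
set f1 := fun w => maxtail P X k (Num.max a (X w)).
set f2 := fun w => maxtail P Y k (Num.max b (Y w)).
have -> : l * Exp P f1 + (1 - l) * Exp P f2 =
    Exp P (fun w => l * f1 w + (1 - l) * f2 w).
  by rewrite E_add ?E_scale //; apply: intg_scale.
apply: (@le_trans _ _ (Exp P (fun w => maxtail P Z k
     (l * Num.max a (X w) + (1 - l) * Num.max b (Y w))))).
  apply: E_le.
  - exact: intg_comp _ iZ (lip_maxtail k iZ).
  - apply: intg_comp1 _ (lip_maxtail k iZ).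
    have ma : lip id by move=> x y.
    exact: intg_add (intg_scale _ (intg_comp a iX ma))
                    (intg_scale _ (intg_comp b iY ma)).
  have hZ : {ae P, forall w, Z w <= Z w} by apply: aeW => w.
  move=> w; apply: (maxtail_mono k iZ iZ hZ).
  rewrite ge_max; apply/andP; split; apply: lerD; apply: ler_wpM2l => //;
    by rewrite le_max lexx ?orbT.
apply: E_le.
- apply: intg_comp1 _ (lip_maxtail k iZ).
  have ma : lip id by move=> x y.
  exact: intg_add (intg_scale _ (intg_comp a iX ma))
                  (intg_scale _ (intg_comp b iY ma)).
- by apply: intg_add; apply: intg_scale.
by move=> w; apply: (IH X Y l iX iY); apply/andP.
Qed.

Lemma MAXVAR_conv n X Y l : intg X -> intg Y -> 0 <= l <= 1 ->
  MAXVAR P n (fun w => l * X w + (1 - l) * Y w)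
    <= l * MAXVAR P n X + (1 - l) * MAXVAR P n Y.
Proof.
move=> iX iY hl; rewrite /MAXVAR.
set Z := fun w => l * X w + (1 - l) * Y w.
have iZ : intg Z by exact: intg_add (intg_scale _ iX) (intg_scale _ iY).
have i1 := intg_comp1 iX (lip_maxtail n.-1 iX).
have i2 := intg_comp1 iY (lip_maxtail n.-1 iY).
set f1 := fun w => maxtail P X n.-1 (X w).
set f2 := fun w => maxtail P Y n.-1 (Y w).
have -> : l * Exp P f1 + (1 - l) * Exp P f2 =
    Exp P (fun w => l * f1 w + (1 - l) * f2 w).
  by rewrite E_add ?E_scale //; apply: intg_scale.
apply: E_le.
- exact: intg_comp1 iZ (lip_maxtail _ iZ).
- by apply: intg_add; apply: intg_scale.
by move=> w; apply: maxtail_conv.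
Qed.

Lemma maxtail_hom k : forall X l m, 0 < l -> intg X ->
  maxtail P (fun w => l * X w) k (l * m) = l * maxtail P X k m.
Proof.
elim: k => [|k IH] X l m l0 iX //=.
rewrite -E_scale; last exact: intg_comp m iX (lip_maxtail k iX).
congr (Exp P _); apply: funext => w.
by rewrite -maxr_pMr ?ltW // IH.
Qed.

Lemma MAXVAR_hom n X l : 0 < l -> intg X ->
  MAXVAR P n (fun w => l * X w) = l * MAXVAR P n X.
Proof.
move=> l0 iX; rewrite /MAXVAR -E_scale; last exact: intg_comp1 iX (lip_maxtail _ iX).
congr (Exp P _); apply: funext => w.
by rewrite maxtail_hom.
Qed.

Lemma maxtail_cst k C m :
  maxtail P (fun _ => C) k (Num.max m C) = Num.max m C.
Proof.
elim: k m => [|k IH] m //=.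
by rewrite -maxA maxxx IH E_cst.
Qed.

Lemma MAXVAR_cst n C : MAXVAR P n (fun _ => C) = C.
Proof.
rewrite /MAXVAR; have := maxtail_cst n.-1 C C; rewrite maxxx => ->.
exact: E_cst.
Qed.

Lemma L2_intg X : L2 P X -> intg X.
Proof.
move=> [mX fX].
have h2 : X \in Lfun P 2%:E.
  by rewrite inE; apply/andP; split; rewrite inE.
have h1 := Lfun_subset12 (fin_num_measure P setT measurableT) h2.
by move/Lfun1_integrable: h1.
Qed.

Lemma E_le_L2 (Z : T -> R) : measurable_fun setT Z -> intg Z ->
  ((Exp P (fun w => `|Z w|))%:E <= Lnorm P 2%:E (fun w => (Z w)%:E))%E.
Proof.
move=> mZ iZ.
have h2 : (0 < 2 :> R) by [].
have h22 : (2^-1 + 2^-1 = 1 :> R) by rewrite -div1r -splitr.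
have := @hoelder _ _ _ P Z (cst 1) 2 2 mZ (measurable_cst _) h2 h2 h22.
rewrite Lnorm_cst1.
have hP : (P : {measure set T -> \bar R}) [set: T] = 1%E := probability_setT P.
rewrite hP poweR1r mule1 => H; apply: le_trans H.
rewrite Lnorm1 /Exp /Rintegral fineK; last exact: integrable_fin_num (intg_norm iZ).
under [X in (_ <= X)%E]eq_integral => x _ do rewrite /= mulr1.
by [].
Qed.

End S.

Theorem theorem1 (R : realType) (d : measure_display) (T : measurableType d)
  (P : probability T R) (n : nat) (hn : (1 <= n)%N) :
  (* (A1) *)
  (forall C : R, MAXVAR P n (fun _ => C) = C) /\
  (* (A2) *)
  (forall (X Y : T -> R) (l : R), L2 P X -> L2 P Y -> 0 <= l <= 1 ->
     MAXVAR P n (fun w => l * X w + (1 - l) * Y w)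
       <= l * MAXVAR P n X + (1 - l) * MAXVAR P n Y) /\
  (* (A3) *)
  (forall X Y : T -> R, L2 P X -> L2 P Y ->
     {ae P, forall w, X w <= Y w} -> MAXVAR P n X <= MAXVAR P n Y) /\
  (* (A4) *)
  (forall (Xk : nat -> T -> R) (X : T -> R),
     (forall k, L2 P (Xk k)) -> L2 P X ->
     (fun k => Lnorm P 2%:E (fun w => (Xk k w - X w)%:E)) @ \oo --> 0%E ->
     (forall k, MAXVAR P n (Xk k) <= 0) -> MAXVAR P n X <= 0) /\
  (* (A5) *)
  (forall (X : T -> R) (l : R), 0 < l -> L2 P X ->
     MAXVAR P n (fun w => l * X w) = l * MAXVAR P n X).
Proof.
split; first exact: MAXVAR_cst.
split; first by move=> X Y l hX hY hl; apply: MAXVAR_conv => //; apply: L2_intg.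
split; first by move=> X Y hX hY; apply: MAXVAR_mono; apply: L2_intg.
split; last by move=> X l l0 hX; apply: MAXVAR_hom => //; apply: L2_intg.
move=> Xk X hk hX hcv hle.
have iX := L2_intg hX.
have n0 : (0 < n%:R :> R) by rewrite ltr0n.
apply/ler_gtP => e e0.
have e'0 : 0 < e / n%:R by rewrite divr_gt0.
move/fine_cvgP: hcv => [hfin /cvgr_dist_lt /(_ _ e'0) hlt].
have [N _ HN] := filterI hfin hlt.
have [hf hl] := HN N (leqnn N).
set Z := fun w => Xk N w - X w.
have iXN := L2_intg (hk N).
have iZ : intg P Z by exact: intg_sub iXN iX.
have mZ : measurable_fun setT Z.
  by apply/measurable_EFinP; case/integrableP: iZ.
have hZ := E_le_L2 mZ iZ.
have hE : Exp P (fun w => `|Z w|) < e / n%:R.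
  rewrite -lte_fin (le_lt_trans hZ) //.
  rewrite -(fineK hf) lte_fin.
  move: hl; rewrite sub0r normrN /=.
  by apply: le_lt_trans; exact: ler_norm.
have hL := MAXVAR_lip hn iXN iX.
have : MAXVAR P n X <= MAXVAR P n (Xk N) + n%:R * Exp P (fun w => `|Z w|).
  move: hL; rewrite distrC => /(le_trans (ler_norm _)).
  by rewrite lerBlDl.
move=> H; apply: (le_trans H); apply: ltW.
apply: (@le_lt_trans _ _ (n%:R * Exp P (fun w => `|Z w|))).
  by rewrite -[leRHS]add0r lerD2r hle.
by rewrite -ltr_pdivlMl // mulrC.
Qed.
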